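(* Let $G_1$ and $G_2$ be two graphs of order $n$ which have the same Laplacian spectra but different degree sequences. Let $\Gamma$ be an arbitrary graph, where, if $G_1$ or $G_2$ has an isolated vertex, $\Gamma$ is assumed to have at least $2$ vertices. Then $G_1\vee\Gamma$ and $G_2\vee\Gamma$ have the same Laplacian spectra for every such $\Gamma$. Moreover, there is a finite set $S$ consisting of at most $n-1$ integers such that $Z_{G_1\vee\Gamma}\ne Z_{G_2\vee\Gamma}$ for every such $\Gamma$ whose order does not lie in $S$.
   Context: Graphs are finite and simple. The Laplacian of a graph is $L=D-A$ ($D$ degree matrix, $A$ adjacency matrix). The join $G\vee\Gamma$ is the disjoint union of $G$ and $\Gamma$ with all edges between a vertex of $G$ and a vertex of $\Gamma$ added. $Z_G$ is the Ihara zeta function: for a graph with $n_G$ vertices and $m_G$ edges, $Z_G(t)=(1-t^2)^{n_G-m_G}\det(I-tA+t^2(D-I))^{-1}$ (equivalently the product $\prod_{[\gamma]}(1-t^{\ell(\gamma)})^{-1}$ over rotation classes of primitive closed geodesics). *)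

(* Defs.v *)
From HB Require Import structures.
From mathcomp Require Import all_boot all_order all_algebra.
From mathcomp Require Import fraction.
Set Implicit Arguments. Unset Strict Implicit. Unset Printing Implicit Defensive.
Import Order.TTheory GRing.Theory Num.Theory.
Local Open Scope ring_scope.

Definition simple_graph (n : nat) (e : rel 'I_n) : Prop :=
  symmetric e /\ irreflexive e.

Definition deg (n : nat) (e : rel 'I_n) (x : 'I_n) : nat := #|[set y | e x y]|.

Definition degseq (n : nat) (e : rel 'I_n) : seq nat :=
  sort leq [seq deg e x | x <- enum 'I_n].

Definition has_isolated (n : nat) (e : rel 'I_n) : Prop :=
  exists x : 'I_n, deg e x = 0%N.

Definition nedges (n : nat) (e : rel 'I_n) : nat :=
  #|[set p : 'I_n * 'I_n | e p.1 p.2 && (p.1 < p.2)%N]|.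

Definition adjmx (R : pzRingType) (n : nat) (e : rel 'I_n) : 'M[R]_n :=
  \matrix_(i, j) (e i j)%:R.
Definition degmx (R : pzRingType) (n : nat) (e : rel 'I_n) : 'M[R]_n :=
  \matrix_(i, j) (if i == j then (deg e i)%:R else 0).
Definition laplacian (R : pzRingType) (n : nat) (e : rel 'I_n) : 'M[R]_n :=
  degmx R e - adjmx R e.

(* Same Laplacian spectrum (as multisets): equal characteristic polynomials
   of the (integer) Laplacian matrices. *)
Definition lap_cospectral (n : nat) (e1 e2 : rel 'I_n) : Prop :=
  char_poly (laplacian int e1) = char_poly (laplacian int e2).

Definition gjoin (n m : nat) (e : rel 'I_n) (g : rel 'I_m) : rel 'I_(n + m) :=
  fun x y =>
    match split x, split y with
    | inl a, inl b => e a b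
    | inr a, inr b => g a b
    | _, _ => true
    end.

(* Ihara zeta function, as a rational function in t with rational coefficients:
   Z_G(t) = (1 - t^2)^(n - m) / det(I - tA + t^2 (D - I)). *)
Definition ihara_det (n : nat) (e : rel 'I_n) : {poly rat} :=
  \det (1%:M - 'X *: map_mx polyC (adjmx rat e)
        + 'X ^+ 2 *: map_mx polyC (degmx rat e - 1%:M)).

Definition ihara_zeta (n : nat) (e : rel 'I_n) : {fraction {poly rat}} :=
  (@FracField.tofrac {poly rat} (1 - 'X ^+ 2)) ^ (n%:Z - (nedges e)%:Z) / FracField.tofrac (ihara_det e).

(* Main.v *)
Require Import Defs.
From HB Require Import structures.
From mathcomp Require Import all_boot all_order all_algebra.
From mathcomp Require Import fraction.
From mathcomp Require Import zify ring lra.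
From mathcomp Require Import perm.
Import Order.TTheory GRing.Theory Num.Theory.
Set Implicit Arguments. Unset Strict Implicit. Unset Printing Implicit Defensive.
Local Open Scope ring_scope.

Lemma split_l n m (i : 'I_n) : split (lshift m i) = inl i.
Proof. exact: (unsplitK (inl i)). Qed.
Lemma split_r n m (i : 'I_m) : split (rshift n i) = inr i.
Proof. exact: (unsplitK (inr i)). Qed.

Lemma degE n (e : rel 'I_n) x : deg e x = (\sum_y (e x y : nat))%N.
Proof.
rewrite /deg -sum1_card big_mkcond /=; apply: eq_bigr => y _.
by rewrite inE; case: (e x y).
Qed.

Lemma deg_join_l n m (e : rel 'I_n) (g : rel 'I_m) i :
  deg (gjoin e g) (lshift m i) = (deg e i + m)%N.
Proof.
rewrite !degE big_split_ord /=; congr (_ + _)%N.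
  by apply: eq_bigr => j _; rewrite /gjoin split_l split_l.
rewrite (eq_bigr (fun _ => 1%N)); last by move=> j _; rewrite /gjoin split_l split_r.
by rewrite sum_nat_const card_ord muln1.
Qed.

Lemma deg_join_r n m (e : rel 'I_n) (g : rel 'I_m) i :
  deg (gjoin e g) (rshift n i) = (deg g i + n)%N.
Proof.
rewrite !degE big_split_ord /= addnC; congr (_ + _)%N.
  by apply: eq_bigr => j _; rewrite /gjoin split_r split_r.
rewrite (eq_bigr (fun _ => 1%N)); last by move=> j _; rewrite /gjoin split_r split_l.
by rewrite sum_nat_const card_ord muln1.
Qed.

Lemma handshake n (e : rel 'I_n) : simple_graph e ->
  (\sum_x deg e x = 2 * nedges e)%N.
Proof.
move=> [esym eirr].
have HN : nedges e = (\sum_x \sum_y ((e x y && (x < y)%N) : nat))%N.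
  rewrite /nedges -sum1_card big_mkcond /= pair_big /=; apply: eq_bigr => p _.
  by rewrite inE; case: (_ && _).
have HN2 : nedges e = (\sum_x \sum_y ((e x y && (y < x)%N) : nat))%N.
  rewrite HN exchange_big /=; apply: eq_bigr => x _; apply: eq_bigr => y _.
  by rewrite esym.
rewrite mul2n -addnn {1}HN {1}HN2 -big_split /=; apply: eq_bigr => x _.
rewrite degE -big_split /=; apply: eq_bigr => y _.
case exy: (e x y) => //=.
have : x != y by apply: contraTneq exy => ->; rewrite eirr.
rewrite neq_ltn; case/orP => h; first by rewrite h ltnNge ltnW.
by rewrite h ltnNge ltnW.
Qed.

Lemma gjoin_simple n m (e : rel 'I_n) (g : rel 'I_m) :
  simple_graph e -> simple_graph g -> simple_graph (gjoin e g).
Proof.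
move=> [es ei] [gs gi]; split.
  by move=> x y; rewrite /gjoin; case: (split x) => a; case: (split y) => b.
by move=> x; rewrite /gjoin; case: (split x) => a.
Qed.

Lemma nedges_join_eq n m (e1 e2 : rel 'I_n) (g : rel 'I_m) :
  simple_graph e1 -> simple_graph e2 -> simple_graph g ->
  (\sum_x deg e1 x = \sum_x deg e2 x)%N ->
  nedges (gjoin e1 g) = nedges (gjoin e2 g).
Proof.
move=> s1 s2 sg hs.
have H (e : rel 'I_n) : simple_graph e -> (2 * nedges (gjoin e g) =
   \sum_i (deg e i + m) + \sum_j (deg g j + n))%N.
  move=> se; rewrite -handshake; last exact: gjoin_simple.
  rewrite big_split_ord /=; congr (_ + _)%N; apply: eq_bigr => i _.
    exact: deg_join_l.
  exact: deg_join_r.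
have := H e1 s1; have := H e2 s2.
rewrite !big_split /= hs => <- /eqP; rewrite eqn_mul2l /=.
by move/eqP.
Qed.

Lemma tr_lap (R : pzRingType) n (e : rel 'I_n) : irreflexive e ->
  \tr (laplacian R e) = (\sum_i deg e i)%:R.
Proof.
move=> ei; rewrite /mxtrace natr_sum; apply: eq_bigr => i _.
by rewrite /laplacian !mxE eqxx ei subr0.
Qed.

Lemma sumdeg_eq n (e1 e2 : rel 'I_n) : (0 < n)%N ->
  irreflexive e1 -> irreflexive e2 -> lap_cospectral e1 e2 ->
  (\sum_x deg e1 x = \sum_x deg e2 x)%N.
Proof.
move=> n0 i1 i2 hc; have := char_poly_trace (laplacian int e1) n0.
rewrite hc char_poly_trace // !tr_lap // => /eqP; rewrite eqr_opp eqr_nat.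
by move/eqP.
Qed.

Lemma n_ge2 n (e1 e2 : rel 'I_n) : irreflexive e1 -> irreflexive e2 ->
  degseq e1 != degseq e2 -> (1 < n)%N.
Proof.
move=> i1 i2; rewrite ltnNge; apply: contra => hn.
have H (e : rel 'I_n) x : irreflexive e -> deg e x = 0%N.
  move=> ei; rewrite degE big1 // => y _.
  have -> : y = x.
    apply: ord_inj; have := ltn_ord x; have := ltn_ord y; lia.
  by have := ei x; case: (e x x).
rewrite /degseq; apply/eqP; congr sort; apply: eq_map => x.
by rewrite !H.
Qed.

Lemma coef_prod_top (R : nzRingType) (I : Type) (r : seq I) (F : I -> {poly R}) k :
  (forall i, (size (F i) <= k.+1)%N) ->
  (size (\prod_(i <- r) F i)%R <= (k * size r).+1)%N /\
  (\prod_(i <- r) F i)`_(k * size r) = \prod_(i <- r) (F i)`_k.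
Proof.
move=> hF; elim: r => [|a r [IHs IHc]].
  by rewrite !big_nil muln0 size_poly1 coef1.
rewrite !big_cons /=; split.
  apply: leq_trans (size_polyMleq _ _) _.
  have := hF a; move: IHs; rewrite mulnS.
  move: (size (F a)) (size (\prod_(j <- r) F j)) => x y; lia.
rewrite mulnS coefM.
have hk : (k < (k + k * size r).+1)%N by rewrite ltnS leq_addr.
rewrite (bigD1 (Ordinal hk)) //= [X in _ + X]big1 ?addr0; first by rewrite addKn IHc.
move=> j /= hj.
have : (nat_of_ord j != k) by apply: contra hj => /eqP hj; apply/eqP/ord_inj.
rewrite neq_ltn; case/orP => h.
  rewrite [X in _ * X]nth_default ?mulr0 //.
  apply: leq_trans IHs _; have := ltn_ord j; move: (nat_of_ord j) h => x; lia.
by rewrite nth_default ?mul0r //; apply: leq_trans (hF a) _.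
Qed.

Lemma det_coef_top (R : comNzRingType) N (M : 'M[{poly R}]_N) k :
  (forall i j, (size (M i j) <= k.+1)%N) ->
  (\det M)`_(k * N) = \det (\matrix_(i, j) (M i j)`_k).
Proof.
move=> hM; have hs : size (index_enum 'I_N) = N by rewrite -sum1_size sum1_card card_ord.
rewrite /determinant coef_sum; apply: eq_bigr => s _.
rewrite !mulr_sign; have [_ hc] := @coef_prod_top _ _ (index_enum 'I_N) (fun i : 'I_N => M i ((s : {perm 'I_N}) i)) k (fun i : 'I_N => hM i ((s : {perm 'I_N}) i)).
rewrite hs in hc.
have -> : \prod_i (\matrix_(i0, j) (M i0 j)`_k) i (s i) = \prod_i (M i (s i))`_k.
  by apply: eq_bigr => i _; rewrite mxE.
by case: (odd_perm s); rewrite ?coefN hc.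
Qed.

Lemma ihara_coef n (e : rel 'I_n) i j (l : nat) :
  ((1%:M - 'X *: map_mx polyC (adjmx rat e)
        + 'X ^+ 2 *: map_mx polyC (degmx rat e - 1%:M)) i j)`_l =
  (if l == 0%N then (i == j)%:R else 0) - (if l == 1%N then adjmx rat e i j else 0)
  + (if l == 2%N then (degmx rat e - 1%:M) i j else 0).
Proof.
rewrite !mxE coefD coefB coefXM coefXnM !coefC coefMn coef1.
case: l => [|[|[|l]]] //=; rewrite ?mul0rn ?subr0 ?addr0 ?sub0r ?add0r ?mulr1n //.
Qed.

Lemma ihara_top n (e : rel 'I_n) :
  (ihara_det e)`_(2 * n) = \det (degmx rat e - 1%:M).
Proof.
rewrite /ihara_det det_coef_top => [|i j].
  by congr (\det _); apply/matrixP => i j; rewrite mxE ihara_coef /= sub0r add0r.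
by apply/leq_sizeP => l hl; rewrite ihara_coef; case: l hl => [|[|[|l]]] //= _; rewrite subr0 addr0.
Qed.

Lemma det_degmx1 n (e : rel 'I_n) :
  \det (degmx rat e - 1%:M) = \prod_i ((deg e i)%:R - 1).
Proof.
have -> : degmx rat e - 1%:M = diag_mx (\row_i ((deg e i)%:R - 1)).
  apply/matrixP => i j; rewrite !mxE; case: eqP => [->|_] //=; by rewrite ?eqxx ?subr0.
by rewrite det_diag; apply: eq_bigr => i _; rewrite mxE.
Qed.

Lemma det_degmx1_join n m (e : rel 'I_n) (g : rel 'I_m) :
  \det (degmx rat (gjoin e g) - 1%:M) =
  \prod_i ((deg e i + m)%:R - 1) * \prod_j ((deg g j + n)%:R - 1).
Proof.
rewrite det_degmx1 big_split_ord /=; congr (_ * _); apply: eq_bigr => i _.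
  by rewrite deg_join_l.
by rewrite deg_join_r.
Qed.

Definition Pe n (e : rel 'I_n) : {poly rat} :=
  \prod_(x <- [seq 1 - (deg e i)%:R | i <- enum 'I_n]) ('X - x%:P).

Lemma Pe_eval n (e : rel 'I_n) (m : nat) :
  (Pe e).[m%:R] = \prod_i ((deg e i + m)%:R - 1).
Proof.
rewrite /Pe horner_prod big_map enumT; apply: eq_bigr => i _.
by rewrite hornerXsubC natrD; ring.
Qed.

Lemma Pe_inj n (e1 e2 : rel 'I_n) : Pe e1 = Pe e2 -> degseq e1 = degseq e2.
Proof.
move/prod_XsubC_eq => hp; rewrite /degseq; apply/perm_sortP.
- exact: leq_total.
- exact: leq_trans.
- exact: anti_leq.
apply: (@perm_map_inj _ _ (fun d : nat => 1 - (d%:R : rat))).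
  by move=> a b /= /eqP; rewrite (inj_eq (addrI 1)) eqr_opp eqr_nat => /eqP.
by rewrite -!map_comp; move: hp; rewrite enumT.
Qed.

Lemma size_Pe_sub n (e1 e2 : rel 'I_n) : (size (Pe e1 - Pe e2)%R <= n)%N.
Proof.
have hs (e : rel 'I_n) : size (Pe e) = n.+1.
  by rewrite /Pe size_prod_XsubC size_map size_enum_ord.
have hl (e : rel 'I_n) : (Pe e)`_n = 1.
  have h : lead_coef (Pe e) = 1 by exact: lead_coef_prod_XsubC.
  by move: h; rewrite /lead_coef hs.
apply/leq_sizeP => j hj; rewrite coefB.
case: (ltngtP n j) hj => // [hj _ | <- _].
  by rewrite !nth_default ?subrr // hs.
by rewrite !hl subrr.
Qed.

From Stdlib Require Import Classical.

Lemma nat_roots (p : {poly rat}) : p != 0 ->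
  exists s : seq nat, (size s <= (size p).-1)%N /\
    forall k : nat, root p k%:R -> k \in s.
Proof.
move: {2}(size p) (leqnn (size p)) => N; elim: N p => [|N IH] p hN p0.
  by move: hN; rewrite leqn0 size_poly_eq0 (negPf p0).
case: (classic (exists k : nat, root p k%:R)) => [[k hk]|hno]; last first.
  exists [::]; split => // k hk; exfalso; apply: hno; by exists k.
case/factor_theorem: hk => q hq.
have q0 : q != 0 by apply: contra p0; rewrite hq => /eqP ->; rewrite mul0r.
have hsq : size p = (size q).+1.
  by rewrite hq size_mul ?polyXsubC_eq0 // size_XsubC addn2.
have hq2 : (size q <= N)%N by move: hN; rewrite hsq.
have [s [hs1 hs2]] := IH q hq2 q0.
exists (k :: s); split.
  rewrite /= hsq /=; have : (0 < size q)%N by rewrite size_poly_gt0.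
  by move: hs1; move: (size q) (size s) => x y; lia.
move=> j; rewrite hq rootM root_XsubC inE => /orP [hj|hj].
  by rewrite hs2 ?orbT.
by move: hj; rewrite eqr_nat => ->.
Qed.

Lemma part2 (n : nat) (e1 e2 : rel 'I_n) :
  simple_graph e1 -> simple_graph e2 ->
  lap_cospectral e1 e2 ->
  degseq e1 != degseq e2 ->
  (exists S : seq nat, (size S <= n.-1)%N /\
     forall (m : nat) (g : rel 'I_m), (0 < m)%N -> simple_graph g ->
       (has_isolated e1 \/ has_isolated e2 -> (2 <= m)%N) ->
       m \notin S ->
       ihara_zeta (gjoin e1 g) != ihara_zeta (gjoin e2 g)).
Proof.
move=> s1 s2 hc hd.
have n2 := n_ge2 s1.2 s2.2 hd.
have hsum := sumdeg_eq (ltnW n2) s1.2 s2.2 hc.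
have D0 : Pe e1 - Pe e2 != 0.
  by rewrite subr_eq0; apply: contra hd => /eqP /Pe_inj ->.
have [S [hS1 hS2]] := nat_roots D0.
exists S; split.
  by apply: leq_trans hS1 _; have := size_Pe_sub e1 e2; case: (size _) => //= x; case: n {n2 hS2 e1 e2 s1 s2 hc hd hsum D0} => //= n; lia.
move=> m g m0 sg _ hm; apply/negP => /eqP hz.
have hE := nedges_join_eq s1 s2 sg hsum.
have hdet : ihara_det (gjoin e1 g) = ihara_det (gjoin e2 g).
  move: hz; rewrite /ihara_zeta hE.
  set c := (_ ^ _).
  have c0 : c != 0.
    rewrite /c; apply: expfz_neq0; rewrite tofrac_eq0; apply/eqP => h.
    move: (congr1 (fun p : {poly rat} => p`_0) h).
    rewrite coefB coef1 coefXn /= subr0 coef0 => /eqP; by rewrite oner_eq0.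
  by move/(mulfI c0)/invr_inj/eqP; rewrite tofrac_eq => /eqP.
have := congr1 (fun p : {poly rat} => p`_(2 * (n + m))) hdet; rewrite /= !ihara_top !det_degmx1_join.
move/mulIf => h.
have: root (Pe e1 - Pe e2) m%:R.
  rewrite /root hornerD hornerN !Pe_eval h ?subrr //.
  apply/prodf_neq0 => j _; rewrite subr_eq0 pnatr_eq1; move: n2; lia.
move/hS2 => hmS; by rewrite hmS in hm.
Qed.

Section DetBlock.
Variable F : fieldType.

Lemma constJ a b c :
  (const_mx 1 : 'M[F]_(a, b)) *m (const_mx 1 : 'M_(b, c)) = b%:R *: const_mx 1.
Proof.
apply/matrixP => i j; rewrite !mxE (eq_bigr (fun _ => 1)) => [|k _]; last by rewrite !mxE mulr1.
by rewrite sumr_const card_ord mulr1.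
Qed.

Lemma detL n m (A : 'M[F]_n) (B : 'M[F]_m) al :
  al != 0 -> A *m const_mx 1 = al *: (const_mx 1 : 'M_(n, m)) ->
  \det (block_mx A (const_mx 1) (const_mx 1) B) =
  \det A * \det (B - (n%:R / al) *: const_mx 1).
Proof.
move=> al0 hA.
set T := block_mx (1%:M : 'M_n) (- al^-1 *: (const_mx 1 : 'M_(n, m))) 0 (1%:M : 'M_m).
have dT : \det T = 1 by rewrite det_ublock !det1 mulr1.
rewrite -[LHS]mulr1 -[X in _ * X]dT -det_mulmx mulmx_block !mulmx1 !mulmx0 !addr0.
rewrite -!scalemxAr hA constJ !scalerA mulNr mulVf // scaleN1r addNr.
rewrite det_lblock addrC; congr (_ * \det (_ + _)).
by rewrite mulNr mulrC scaleNr.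
Qed.

Lemma detL' n m (A : 'M[F]_n) (B : 'M[F]_m) be :
  be != 0 -> B *m const_mx 1 = be *: (const_mx 1 : 'M_(m, n)) ->
  \det (block_mx A (const_mx 1) (const_mx 1) B) =
  \det (A - (m%:R / be) *: const_mx 1) * \det B.
Proof.
move=> be0 hB.
set T := block_mx (1%:M : 'M_n) 0 (- be^-1 *: (const_mx 1 : 'M_(m, n))) (1%:M : 'M_m).
have dT : \det T = 1 by rewrite det_lblock !det1 mulr1.
rewrite -[LHS]mulr1 -[X in _ * X]dT -det_mulmx mulmx_block !mulmx1 !mulmx0 !add0r.
rewrite -!scalemxAr hB constJ !scalerA [in X in block_mx _ _ X _]mulNr mulVf // scaleN1r addrN.
rewrite det_ublock; congr (\det (_ + _) * _).
by rewrite mulNr mulrC scaleNr.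
Qed.

Lemma det1J m (k : F) :
  \det ((1%:M : 'M[F]_m) - k *: const_mx 1) = 1 - k * m%:R.
Proof.
have [->|k0] := eqVneq k 0; first by rewrite scale0r subr0 det1 mul0r subr0.
set N := block_mx (1%:M : 'M[F]_m) (const_mx 1 : 'M_(m, 1)) (const_mx 1) (k^-1%:M : 'M_1).
have h1 : \det N = k^-1 - m%:R.
  rewrite /N (@detL m 1 _ _ 1) ?oner_eq0 ?mul1mx ?scale1r // det1 mul1r det_mx11.
  by rewrite !mxE /= divr1 mulr1.
have h2 : \det N = \det ((1%:M : 'M[F]_m) - k *: const_mx 1) * k^-1.
  have hB : (k^-1%:M : 'M[F]_1) *m (const_mx 1 : 'M_(1, m)) = k^-1 *: const_mx 1 by rewrite mul_scalar_mx.
  by rewrite /N (@detL' m 1 _ _ k^-1 (invr_neq0 k0) hB) det_scalar expr1 div1r invrK.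

have : \det (1%:M - k *: (const_mx 1 : 'M[F]_m)) * k^-1 = (1 - k * m%:R) * k^-1.
  by rewrite -h2 h1 mulrBl mul1r mulrC mulKf.
by move/(mulIf (invr_neq0 k0)).
Qed.

Lemma det_join_formula n m (A : 'M[F]_n) (B : 'M[F]_m) al be :
  al != 0 -> be != 0 ->
  A *m const_mx 1 = al *: (const_mx 1 : 'M_(n, m)) ->
  B *m const_mx 1 = be *: (const_mx 1 : 'M_m) ->
  \det (block_mx A (const_mx 1) (const_mx 1) B) =
  \det A * \det B * (1 - (n%:R / al / be) * m%:R).
Proof.
move=> al0 be0 hA hB; rewrite (detL _ al0 hA).
have -> : B - (n%:R / al) *: const_mx 1 = B *m (1%:M - (n%:R / al / be) *: const_mx 1).
  by rewrite mulmxBr mulmx1 -scalemxAr hB scalerA mulrC divfK.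
by rewrite det_mulmx det1J mulrA.
Qed.
End DetBlock.

Lemma lap_row0 (R : comNzRingType) n (e : rel 'I_n) k :
  laplacian R e *m (const_mx 1 : 'M_(n, k)) = 0.
Proof.
apply/matrixP => i j; rewrite !mxE.
rewrite (eq_bigr (fun l => (if i == l then (deg e i)%:R else 0) - (e i l)%:R)) => [|l _]; last by rewrite !mxE mulr1.
rewrite sumrB (bigD1 i) //= eqxx big1 ?addr0 => [|l /negPf]; last by rewrite eq_sym => ->.
by rewrite degE natr_sum subrr.
Qed.

Lemma char_poly_horner (R : comNzRingType) n (A : 'M[R]_n) x :
  (char_poly A).[x] = \det (x%:M - A).
Proof.
rewrite /char_poly -horner_evalE -det_map_mx; congr (\det _).
apply/matrixP => i j; rewrite !mxE rmorphB rmorphMn /= !horner_evalE hornerX hornerC.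
by [].
Qed.

Lemma poly_eq_large (p q : {poly rat}) c :
  (forall k : nat, p.[(k + c)%:R] = q.[(k + c)%:R]) -> p = q.
Proof.
move=> h; apply/eqP; rewrite -subr_eq0; apply/negPn/negP => h0.
set rs := [seq (k + c)%:R | k <- iota 0 (size (p - q))] : seq rat.
have hall : all (root (p - q)) rs.
  by apply/allP => x /mapP [k _ ->]; rewrite /root hornerD hornerN h subrr.
have hu : uniq rs.
  rewrite map_inj_uniq ?iota_uniq // => a b /eqP; rewrite eqr_nat eqn_add2r.
  by move/eqP.
by have := max_poly_roots h0 hall hu; rewrite size_map size_iota ltnn.
Qed.

Lemma join_block n m (e : rel 'I_n) (g : rel 'I_m) (a : rat) :
  a%:M - laplacian rat (gjoin e g) =
  block_mx ((a - m%:R)%:M - laplacian rat e) (const_mx 1) (const_mx 1)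
           ((a - n%:R)%:M - laplacian rat g).
Proof.
apply/matrixP => i j; rewrite -[i]splitK -[j]splitK.
case: (split i) => i'; case: (split j) => j' /=.
- rewrite block_mxEul !mxE eq_lshift deg_join_l /gjoin !split_l.
  by case: eqP => _; rewrite ?natrD /=; ring.
- rewrite block_mxEur !mxE eq_lrshift /gjoin split_l split_r /=; ring.
- rewrite block_mxEdl !mxE eq_rlshift /gjoin split_l split_r /=; ring.
- rewrite block_mxEdr !mxE eq_rshift deg_join_r /gjoin !split_r.
  by case: eqP => _; rewrite ?natrD /=; ring.
Qed.

Lemma lap_map n (e : rel 'I_n) :
  map_mx (intr : int -> rat) (laplacian int e) = laplacian rat e.
Proof.
apply/matrixP => i j; rewrite !mxE rmorphB /=; congr (_ - _).
  by case: eqP => _; rewrite ?rmorph_nat ?rmorph0.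
by rewrite rmorph_nat.
Qed.

Lemma lap_cosp_rat n (e1 e2 : rel 'I_n) : lap_cospectral e1 e2 ->
  char_poly (laplacian rat e1) = char_poly (laplacian rat e2).
Proof. by move=> hc; rewrite -!lap_map -!map_char_poly hc. Qed.

Lemma part1 n m (e1 e2 : rel 'I_n) (g : rel 'I_m) :
  lap_cospectral e1 e2 -> lap_cospectral (gjoin e1 g) (gjoin e2 g).
Proof.
move=> /lap_cosp_rat hq; rewrite /lap_cospectral.
apply: (@map_inj_poly _ _ (intr : int -> rat)); [exact: intr_inj | by rewrite rmorph0 |].
rewrite !map_char_poly !lap_map.
apply: (@poly_eq_large _ _ (n + m).+1) => k.
rewrite !char_poly_horner !join_block.
set a : rat := (k + (n + m).+1)%:R.
have al0 : a - m%:R != 0.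
  by rewrite subr_eq0 /a eqr_nat; apply/negP => /eqP; lia.
have be0 : a - n%:R != 0.
  by rewrite subr_eq0 /a eqr_nat; apply/negP => /eqP; lia.
have hA (e : rel 'I_n) : ((a - m%:R)%:M - laplacian rat e) *m const_mx 1 =
    (a - m%:R) *: (const_mx 1 : 'M_(n, m)).
  by rewrite mulmxBl lap_row0 subr0 mul_scalar_mx.
have hB : ((a - n%:R)%:M - laplacian rat g) *m const_mx 1 =
    (a - n%:R) *: (const_mx 1 : 'M_m).
  by rewrite mulmxBl lap_row0 subr0 mul_scalar_mx.
rewrite !(det_join_formula al0 be0 (hA _) hB).
by rewrite -!char_poly_horner hq.
Qed.

Unset Implicit Arguments.

Theorem proposition4p6 (n : nat) (e1 e2 : rel 'I_n) :
  simple_graph e1 -> simple_graph e2 ->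
  lap_cospectral e1 e2 ->
  degseq e1 != degseq e2 ->
  (forall (m : nat) (g : rel 'I_m), (0 < m)%N -> simple_graph g ->
     (has_isolated e1 \/ has_isolated e2 -> (2 <= m)%N) ->
     lap_cospectral (gjoin e1 g) (gjoin e2 g))
  /\
  (exists S : seq nat, (size S <= n.-1)%N /\
     forall (m : nat) (g : rel 'I_m), (0 < m)%N -> simple_graph g ->
       (has_isolated e1 \/ has_isolated e2 -> (2 <= m)%N) ->
       m \notin S ->
       ihara_zeta (gjoin e1 g) != ihara_zeta (gjoin e2 g)).
Proof.
move=> s1 s2 hc hd; split.
  by move=> m g _ _ _; apply: part1.
exact: part2.
Qed.
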